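(* Let ${\bm{x}}_i^m\in\mathbb{R}^d$ ($m\in[M]$, $i\in[n]$) satisfy $\|{\bm{x}}_i^m\|\le1$ and be linearly separable. Let $\ell(z)=\log(1+e^{-z})$, $F_m({\bm{w}})=\frac1n\sum_i\ell(\langle{\bm{w}},{\bm{x}}_i^m\rangle)$, $F=\frac1M\sum_mF_m$. Run Local GD with any ${\bm{w}}_0$, $\eta>0$, $K\in\mathbb{N}$: ${\bm{w}}_{r,0}^m={\bm{w}}_r$, ${\bm{w}}_{r,k+1}^m={\bm{w}}_{r,k}^m-\eta\nabla F_m({\bm{w}}_{r,k}^m)$ ($k=0,\dots,K-1$), ${\bm{w}}_{r+1}=\frac1M\sum_m{\bm{w}}_{r,K}^m$. If $F({\bm{w}}_r)\le1/(4\eta M)$ for some $r\ge0$, then for every $m\in[M]$, $F_m({\bm{w}}_{r,k}^m)$ is (non-increasing) decreasing in $k\in\{0,\dots,K\}$.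
   Context: Linear separability means there is ${\bm{w}}$ with $\langle{\bm{w}},{\bm{x}}_i^m\rangle>0$ for all $m,i$ (labels absorbed into data). *)

(* Defs.v *)
From HB Require Import structures.
From mathcomp Require Import all_boot all_order all_algebra.
From mathcomp Require Import boolp classical_sets reals ereal topology normedtype sequences exp.
Set Implicit Arguments. Unset Strict Implicit. Unset Printing Implicit Defensive.
Import Order.TTheory GRing.Theory Num.Theory.
Local Open Scope ring_scope.

Section LocalGD.
Variable R : realType.

Definition inner (d : nat) (u v : 'rV[R]_d) : R := \sum_(j < d) u 0 j * v 0 j.
Definition vnorm (d : nat) (u : 'rV[R]_d) : R := Num.sqrt (inner u u).

Definition logistic (z : R) : R := ln (1 + expR (- z)).
Definition logistic' (z : R) : R := - (1 + expR z)^-1.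

Variables (d M n : nat) (x : 'I_M -> 'I_n -> 'rV[R]_d).

Definition Floc (m : 'I_M) (w : 'rV[R]_d) : R :=
  n%:R^-1 * \sum_(i < n) logistic (inner w (x m i)).
Definition Fglob (w : 'rV[R]_d) : R := M%:R^-1 * \sum_(m < M) Floc m w.
Definition gradFloc (m : 'I_M) (w : 'rV[R]_d) : 'rV[R]_d :=
  n%:R^-1 *: \sum_(i < n) (logistic' (inner w (x m i)) *: x m i).

Variables (eta : R) (K : nat).

Definition local_iter (v : 'rV[R]_d) (m : 'I_M) (k : nat) : 'rV[R]_d :=
  iter k (fun u => u - eta *: gradFloc m u) v.

Fixpoint global_iter (w0 : 'rV[R]_d) (r : nat) : 'rV[R]_d :=
  match r with
  | 0 => w0
  | r'.+1 => M%:R^-1 *: \sum_(m < M) local_iter (global_iter w0 r') m K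
  end.

End LocalGD.

Definition linearly_separable (R : realType) (d M n : nat)
  (x : 'I_M -> 'I_n -> 'rV[R]_d) : Prop :=
  exists w : 'rV[R]_d, forall m i, 0 < inner w (x m i).

(* Main.v *)
Require Import Defs.
From HB Require Import structures.
From mathcomp Require Import all_boot all_order all_algebra.
From mathcomp Require Import boolp classical_sets reals ereal topology normedtype sequences exp.
From mathcomp Require Import ring lra.
Import Order.TTheory GRing.Theory Num.Theory.
Local Open Scope ring_scope.

Section Aux.
Variable R : realType.

Lemma expR_le_inv (s : R) : s < 1 -> expR s <= (1 - s)^-1.
Proof.
move=> hs.
have h := expR_ge1Dx (- s).
rewrite expRN in h.
have h0 : 0 < 1 - s by lra.
rewrite -(invrK (expR s)) lef_pV2 ?posrE ?invr_gt0 ?expR_gt0 //.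
Qed.

Lemma p_le_logistic (z : R) : (1 + expR z)^-1 <= logistic z.
Proof.
rewrite /logistic.
set y := expR (- z).
have hy : 0 < y by apply: expR_gt0.
have e : (1 + expR z)^-1 = y / (1 + y).
  rewrite /y expRN; field.
  have := expR_gt0 z => hz.
  by apply/andP; split; rewrite gt_eqF //; lra.
rewrite e.
have h1 : 0 < 1 + y by lra.
have := @le_ln1Dx R (- (y / (1 + y))).
have -> : 1 + - (y / (1 + y)) = (1 + y)^-1 by field; lra.
rewrite lnV ?posrE //.
move=> H; have : - ln (1 + y) <= - (y / (1 + y)).
  apply: H.
  have : y / (1 + y) < 1.
    by rewrite ltr_pdivrMr // mul1r; lra.
  lra.
lra.
Qed.

Lemma logistic_step (z s : R) : s <= 1/4 ->
  logistic (z - s) <= logistic z + (1 + expR z)^-1 * (s + 4/3 * s^+2).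
Proof.
move=> hs.
rewrite /logistic.
set p := (1 + expR z)^-1.
have hz := expR_gt0 z.
have hp : 0 < p by rewrite invr_gt0; lra.
have hp1 : p < 1.
  rewrite /p invf_lt1; lra.
set y := expR (- z).
have hy : 0 < y by apply: expR_gt0.
have hes := expR_gt0 s.
have e1 : 1 + expR (- (z - s)) = (1 + y) * (1 + p * (expR s - 1)).
  rewrite opprB expRB /y expRN /p. field.
  apply/andP; split; apply/negP => /eqP h; lra.
rewrite e1 lnM ?posrE; last 2 first.
- lra.
- have : 0 < p * expR s by apply: mulr_gt0.
  nra.
apply: lerD => //.
have hle : ln (1 + p * (expR s - 1)) <= p * (expR s - 1).
  apply: le_ln1Dx.
  have : 0 < p * expR s by apply: mulr_gt0.
  nra.
apply: (le_trans hle).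
apply: ler_wpM2l; first lra.
have := @expR_le_inv s ltac:(lra).
have h1s : 0 < 1 - s by lra.
move=> H.
have : (1 - s)^-1 - 1 <= s + 4/3 * s^+2.
  rewrite -subr_ge0.
  have -> : s + 4 / 3 * s ^+ 2 - ((1 - s)^-1 - 1) = s^+2 * (1 - 4 * s) / (3 * (1 - s)).
    field; lra.
  apply: divr_ge0; last lra.
  apply: mulr_ge0; [exact: sqr_ge0 | lra].
lra.
Qed.
End Aux.
Section Inner.
Variables (R : realType) (d : nat).
Implicit Types u v w : 'rV[R]_d.

Lemma innerC u v : inner u v = inner v u.
Proof. by apply: eq_bigr => j _; rewrite mulrC. Qed.

Lemma innerDl u v w : inner (u + v) w = inner u w + inner v w.
Proof. by rewrite /inner -big_split; apply: eq_bigr => j _; rewrite mxE mulrDl. Qed.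

Lemma innerZl c u w : inner (c *: u) w = c * inner u w.
Proof. by rewrite /inner mulr_sumr; apply: eq_bigr => j _; rewrite mxE mulrA. Qed.

Lemma innerNl u w : inner (- u) w = - inner u w.
Proof. by rewrite -scaleN1r innerZl mulN1r. Qed.

Lemma innerBl u v w : inner (u - v) w = inner u w - inner v w.
Proof. by rewrite innerDl innerNl. Qed.

Lemma inner_suml (k : nat) (f : 'I_k -> 'rV[R]_d) w :
  inner (\sum_(i < k) f i) w = \sum_(i < k) inner (f i) w.
Proof.
rewrite /inner (exchange_big) /=; apply: eq_bigr => j _.
by rewrite summxE mulr_suml.
Qed.

Lemma inner_ge0 u : 0 <= inner u u.
Proof. by apply: sumr_ge0 => j _; rewrite -expr2 sqr_ge0. Qed.

Lemma inner_le1 u : vnorm u <= 1 -> inner u u <= 1.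
Proof.
rewrite /vnorm => h.
have := inner_ge0 u => h0.
by rewrite -(@ler_sqrt _ (inner u u) 1) ?sqrtr1.
Qed.

Lemma inner_lower u v : inner u u <= 1 -> inner v v <= 1 -> - inner u v <= 1.
Proof.
move=> hu hv.
have := inner_ge0 (u + v).
rewrite innerDl (innerC u) (innerC v) !innerDl (innerC v u).
lra.
Qed.

Lemma cs_like g u : inner u u <= 1 -> (inner g u)^+2 <= inner g g.
Proof.
move=> hu.
have := inner_ge0 (g - inner g u *: u).
rewrite innerBl innerZl (innerC g) (innerC u) !innerBl !innerZl (innerC u g).
move=> h.
have := inner_ge0 u => h0.
nra.
Qed.
End Inner.
Section Step.
Variables (R : realType) (d M n : nat) (x : 'I_M -> 'I_n -> 'rV[R]_d).
Hypothesis hn : (0 < n)%N.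
Hypothesis hx : forall m i, inner (x m i) (x m i) <= 1.
Variable eta : R.
Hypothesis heta : 0 < eta.

Lemma step m w : Floc x m w <= (4 * eta)^-1 ->
  Floc x m (w - eta *: gradFloc x m w) <= Floc x m w.
Proof.
move=> hF.
pose p i := (1 + expR (inner w (x m i)))^-1.
have hp i : 0 < p i by rewrite invr_gt0 addr_gt0 ?expR_gt0.
set g := gradFloc x m w.
pose a i := inner g (x m i).
pose N := (n%:R : R)^-1.
have hN : 0 < N by rewrite invr_gt0 ltr0n.
have hg : g = N *: \sum_(i < n) (- p i) *: x m i by [].
have hz i : inner (w - eta *: g) (x m i) = inner w (x m i) - eta * a i.
  by rewrite innerBl innerZl.
set G := inner g g.
have hG : G = - (N * \sum_(i < n) p i * a i).
  rewrite /G {1}hg innerZl inner_suml -mulrN -sumrN; congr (_ * _).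
  by apply: eq_bigr => i _; rewrite innerZl mulNr /a innerC.
have hG0 : 0 <= G by apply: inner_ge0.
set S1 := \sum_(i < n) logistic (inner w (x m i)).
set Sp := \sum_(i < n) p i.
have hP : Sp <= S1 by apply: ler_sum => i _; apply: p_le_logistic.
have hF' : N * S1 <= (4 * eta)^-1 by [].
have hpdef i : p i = (1 + expR (inner w (x m i)))^-1 by [].
have hadef i : a i = inner g (x m i) by [].
have hGdef : G = inner g g by [].
have hS1 : S1 = \sum_(i < n) logistic (inner w (x m i)) by [].
have hNdef : N = (n%:R : R)^-1 by [].
have hSp : Sp = \sum_(i < n) p i by [].
clearbody p a G S1 Sp N.
have hetaP : eta * (N * Sp) <= 1/4.
  have : eta * (N * Sp) <= eta * (4 * eta)^-1.
    apply: ler_wpM2l; first exact: ltW.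
    apply: (le_trans _ hF'); apply: ler_wpM2l => //; lra.
  have -> : eta * (4 * eta)^-1 = 1/4 by field; rewrite gt_eqF.
  by [].
have ha i : a i <= N * Sp.
  rewrite hadef hg innerZl inner_suml; apply: ler_wpM2l; first lra.
  rewrite hSp; apply: ler_sum => j _; rewrite innerZl.
  have := hx m j; have := hx m i => h1 h2.
  have := @inner_lower R d _ _ h2 h1 => h3.
  have := hp j; nra.
have hb i : logistic (inner w (x m i) - eta * a i)
    <= logistic (inner w (x m i)) + eta * (p i * a i) + 4/3 * eta^+2 * G * p i.
  have hs : eta * a i <= 1/4.
    apply: (le_trans _ hetaP); apply: ler_wpM2l; [exact: ltW | exact: ha].
  apply: le_trans (@logistic_step R _ _ hs) _.
  rewrite -hpdef -addrA lerD2l.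
  have := @cs_like R d g _ (hx m i); rewrite -hadef -hGdef => hcs.
  have := hp i => hpi.
  have : p i * (eta * a i) ^+ 2 <= p i * (eta ^+ 2 * G).
    apply: ler_wpM2l; first lra.
    rewrite exprMn; apply: ler_wpM2l => //; exact: sqr_ge0.
  nra.
rewrite /Floc.
under eq_bigr => i _ do rewrite hz.
rewrite -hNdef -hS1.
have hsum : \sum_(i < n) logistic (inner w (x m i) - eta * a i) <=
   S1 + eta * \sum_(i < n) p i * a i + 4/3 * eta^+2 * G * Sp.
  rewrite hS1 hSp.
  apply: le_trans (ler_sum _ (fun i _ => hb i)) _.
  by rewrite !big_split /= -mulr_sumr -mulr_sumr.
have : N * \sum_(i < n) logistic (inner w (x m i) - eta * a i) <=
   N * (S1 + eta * \sum_(i < n) p i * a i + 4/3 * eta^+2 * G * Sp).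
  by apply: ler_wpM2l; [exact: ltW | done].
move=> H; apply: le_trans H _.
rewrite !mulrDr.
have -> : N * (eta * \sum_(i < n) p i * a i) = - (eta * G) by rewrite hG; ring.
have : N * (4 / 3 * eta ^+ 2 * G * Sp) = 4/3 * (eta * G) * (eta * (N * Sp)) by ring.
move=> ->.
have hEG : 0 <= eta * G by apply: mulr_ge0; [exact: ltW | done].
have : 4/3 * (eta * G) * (eta * (N * Sp)) <= 4/3 * (eta * G) * (1/4).
  apply: ler_wpM2l => //; lra.
lra.
Qed.
End Step.
Theorem lemma4p6 (R : realType) (d M n : nat) (x : 'I_M -> 'I_n -> 'rV[R]_d)
  (hM : (0 < M)%N) (hn : (0 < n)%N)
  (hnorm : forall m i, vnorm (x m i) <= 1)
  (hsep : linearly_separable x)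
  (w0 : 'rV[R]_d) (eta : R) (heta : 0 < eta) (K r : nat)
  (hF : Fglob x (global_iter x eta K w0 r) <= (4 * eta * M%:R)^-1) :
  forall (m : 'I_M) (k : nat), (k < K)%N ->
    Floc x m (local_iter x eta (global_iter x eta K w0 r) m k.+1)
      <= Floc x m (local_iter x eta (global_iter x eta K w0 r) m k).
Proof.
move=> m k _.
set v := global_iter x eta K w0 r.
have hx m' i : inner (x m' i) (x m' i) <= 1 by apply: inner_le1.
have Fge0 m' u : 0 <= Floc x m' u.
  apply: mulr_ge0; first by rewrite invr_ge0 ler0n.
  apply: sumr_ge0 => i _; apply: ln_ge0.
  by rewrite lerDl ltW ?expR_gt0.
have hv : Floc x m v <= (4 * eta)^-1.
  have hMr : (0 : R) < M%:R by rewrite ltr0n.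
  have h1 : Floc x m v <= \sum_(m' < M) Floc x m' v.
    rewrite (bigD1 m) //= lerDl; apply: sumr_ge0 => i _; exact: Fge0.
  have h2 : \sum_(m' < M) Floc x m' v = M%:R * Fglob x v.
    by rewrite /Fglob mulrA mulfV ?mul1r // gt_eqF.
  apply: (le_trans h1); rewrite h2.
  have -> : (4 * eta)^-1 = M%:R * (4 * eta * M%:R)^-1.
    by field; rewrite !gt_eqF.
  by apply: ler_wpM2l; [exact: ltW | exact: hF].
have hind : forall j, Floc x m (local_iter x eta v m j) <= Floc x m v.
  elim=> [|j IH] //.
  apply: (le_trans _ IH).
  exact: (@step R d M n x hn hx eta heta m (local_iter x eta v m j) (le_trans IH hv)).
exact: (@step R d M n x hn hx eta heta m (local_iter x eta v m k) (le_trans (hind k) hv)).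
Qed.
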